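(* Let $\mu=(d_1,d_2,\dots)$ be a sequence of positive integers and let $t=(t_1,t_2,\dots)\in\prod_n\mathrm{Mat}_{d_n\times d_n}(\mathbb{C})$ with $\sup_n\|t_n\|<\infty$, such that each $t_n$ is self-adjoint and all the $t_n$ together have only finitely many distinct eigenvalues. Then $\mathrm{rk}_1([t]_{\mathcal{M}_\mu})=\mathrm{rk}_2([t]_{\mathcal{M}^{alg}_\mu})$.
   Context: Fix a nonprincipal ultrafilter $\omega$ on $\mathbb{N}$. $\mathcal{M}_\mu$ is the tracial ultraproduct: the quotient of the algebra $\mathcal{B}$ of bounded sequences $(a_n)\in\prod_n\mathrm{Mat}_{d_n\times d_n}(\mathbb{C})$ by the ideal of those with $\lim_\omega tr(a_n^*a_n)/d_n=0$, a finite von Neumann algebra with trace $Tr_\omega([a_n])=\lim_\omega tr(a_n)/d_n$; $[t]_{\mathcal{M}_\mu}$ is the class of $t$ there, and $\mathrm{rk}_1(x)$ is the rank of $x$ as an element of the ring $U(\mathcal{M}_\mu)$ of affiliated operators, i.e. $Tr_\omega$ of the projection generating the right ideal $xU(\mathcal{M}_\mu)$. $\mathcal{M}^{alg}_\mu$ is the quotient of $\prod_n\mathrm{Mat}_{d_n\times d_n}(\mathbb{C})$ by the ideal of sequences with $\lim_\omega\mathrm{rank}(a_n)/d_n=0$, with rank $\mathrm{rk}_2([a_n])=\lim_\omega\mathrm{rank}(a_n)/d_n$; $[t]_{\mathcal{M}^{alg}_\mu}$ is the class of $t$ there. *)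

(* Defs.v *)
From HB Require Import structures.
From mathcomp Require Import all_boot all_order all_algebra.
From mathcomp Require Import complex.
From mathcomp Require Import all_classical all_reals.
From mathcomp Require Import topology normedtype.
From mathcomp Require Import Rstruct Rstruct_topology.
Set Implicit Arguments. Unset Strict Implicit. Unset Printing Implicit Defensive.
Import Order.TTheory GRing.Theory Num.Theory.
Local Open Scope ring_scope.
Local Open Scope classical_set_scope.

Notation RR := Rdefinitions.R.
Notation CC := (complex RR).

Definition nonprincipal_ultrafilter (w : set_system nat) : Prop :=
  [/\ ProperFilter w,
      (forall A : set nat, w A \/ w (~` A)) &
      (forall k : nat, ~ w [set k])].

(* ultralimit of a real sequence (well defined for bounded sequences) *)
Definition ulim (w : set_system nat) (u : nat -> RR) : RR := lim (u @ w).

Definition adj (m : nat) (A : 'M[CC]_m) : 'M[CC]_m :=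
  \matrix_(i, j) (A j i)^*.

Definition vnorm2 (m : nat) (v : 'cV[CC]_m) : CC := \sum_i `|v i 0| ^+ 2.

Definition mxseq (d : nat -> nat) := forall n : nat, 'M[CC]_(d n).

Definition op_bounded (d : nat -> nat) (t : mxseq d) : Prop :=
  exists c : RR, forall (n : nat) (v : 'cV[CC]_(d n)),
    vnorm2 (t n *m v) <= (c%:C)%C ^+ 2 * vnorm2 v.

Definition ntrRe (m : nat) (a : 'M[CC]_m) : RR := @complex.Re RR (\tr a) / m%:R.

Definition nhs2 (m : nat) (a : 'M[CC]_m) : RR := ntrRe (adj a *m a).

(* equality of classes in M_mu = B / {lim_w tr(a_n^* a_n)/d_n = 0} *)
Definition Meq (w : set_system nat) (d : nat -> nat) (a b : mxseq d) : Prop :=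
  ulim w (fun n => nhs2 (a n - b n)) = 0.

Definition Mproj (w : set_system nat) (d : nat -> nat) (p : mxseq d) : Prop :=
  [/\ op_bounded p,
      Meq w (fun n => p n *m p n) p &
      Meq w (fun n => adj (p n)) p].

(* Tr_w([a]) (real part; for a projection it is real) *)
Definition Mtr (w : set_system nat) (d : nat -> nat) (a : mxseq d) : RR :=
  ulim w (fun n => ntrRe (a n)).

(* rk_1([x]) = rank of [x] in U(M_mu) = Tr_w of the projection generating
   [x] U(M_mu), i.e. of the left support projection of [x], which is the
   least projection p of M_mu with p[x] = [x]. *)
Definition rk1 (w : set_system nat) (d : nat -> nat) (x : mxseq d) : RR :=
  inf [set r : RR | exists p : mxseq d,
         [/\ Mproj w p, Meq w (fun n => p n *m x n) x & r = Mtr w p]].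

Definition rk2 (w : set_system nat) (d : nat -> nat) (a : mxseq d) : RR :=
  ulim w (fun n => (\rank (a n))%:R / (d n)%:R).

(* Main.v *)
Require Import Defs.
From HB Require Import structures.
From mathcomp Require Import all_boot all_order all_algebra.
From mathcomp Require Import complex.
From mathcomp Require Import all_classical all_reals.
From mathcomp Require Import topology normedtype.
From mathcomp Require Import Rstruct Rstruct_topology.
From mathcomp Require Import spectral sesquilinear.
From mathcomp Require Import ring lra.
Set Implicit Arguments. Unset Strict Implicit. Unset Printing Implicit Defensive.
Import Order.TTheory GRing.Theory Num.Theory.
Local Open Scope ring_scope.
Local Open Scope classical_set_scope.

Notation ReC := (@complex.Re RR).
Notation ImC := (@complex.Im RR).
Definition sqn (z : CC) : RR := ReC z ^+ 2 + ImC z ^+ 2.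

Lemma sqn_ge0 z : 0 <= sqn z.
Proof. by rewrite /sqn addr_ge0 // sqr_ge0. Qed.

Lemma sqnM a b : sqn (a * b) = sqn a * sqn b.
Proof. case: a => a1 a2; case: b => b1 b2; rewrite /sqn /=. ring. Qed.

Lemma sqn0 : sqn 0 = 0.
Proof. by rewrite /sqn /= expr0n /= addr0. Qed.

Lemma sqn1 : sqn 1 = 1.
Proof. by rewrite /sqn /= expr0n /= addr0 expr1n. Qed.

Lemma sqnN a : sqn (- a) = sqn a.
Proof. case: a => a1 a2; rewrite /sqn /=. ring. Qed.

Lemma sqn_conj a : sqn (Num.conj a) = sqn a.
Proof. case: a => a1 a2; rewrite /sqn /=. ring. Qed.

Lemma Re_conjM a : ReC (Num.conj a * a) = sqn a.
Proof. case: a => a1 a2; rewrite /sqn /=. ring. Qed.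

Lemma norm2_sqn a : `|a| ^+ 2 = ((sqn a)%:C)%C.
Proof. by rewrite -add_Re2_Im2. Qed.

Lemma sqnD e a b : 0 < e -> sqn (a + b) <= (1 + e) * sqn a + (1 + e^-1) * sqn b.
Proof.
move=> e0; case: a => a1 a2; case: b => b1 b2; rewrite /sqn /=.
have ie : e * e^-1 = 1 by rewrite mulfV // gt_eqF.
have ie0 : 0 < e^-1 by rewrite invr_gt0.
set f := e^-1 in ie ie0 *.
have h1 : 0 <= f * (e*a1 - b1)^+2 by rewrite mulr_ge0 ?sqr_ge0 // ltW.
have h2 : 0 <= f * (e*a2 - b2)^+2 by rewrite mulr_ge0 ?sqr_ge0 // ltW.
have E1 : f * (e*a1 - b1)^+2 = e * a1^+2 - 2 * a1 * b1 + f * b1^+2.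
  by rewrite /f; field; rewrite gt_eqF.
have E2 : f * (e*a2 - b2)^+2 = e * a2^+2 - 2 * a2 * b2 + f * b2^+2.
  by rewrite /f; field; rewrite gt_eqF.
lra.
Qed.

Lemma Re_abs_le e a b : 0 < e -> `|ReC (a * b)| <= (sqn a / e + e * sqn b) / 2.
Proof.
move=> e0; case: a => a1 a2; case: b => b1 b2; rewrite /sqn /=.
have ie : e * e^-1 = 1 by rewrite mulfV // gt_eqF.
have ie0 : 0 < e^-1 by rewrite invr_gt0.
have G x y : e^-1 * (x - e * y)^+2 = e^-1 * x^+2 - 2 * x * y + e * y^+2.
  by field; rewrite gt_eqF.
have G' x y : 0 <= e^-1 * (x - e * y)^+2 by rewrite mulr_ge0 ?sqr_ge0 // ltW.
have := G' a1 b1; have := G' a2 (-b2); have := G' a1 (-b1); have := G' a2 b2.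
rewrite !G.
rewrite ler_norml => *; apply/andP; split; nra.
Qed.

Lemma sqnV a : a != 0 -> sqn a^-1 * sqn a = 1.
Proof. by move=> a0; rewrite -sqnM mulVf // sqn1. Qed.

Definition ct (m n : nat) (X : 'M[CC]_(m, n)) : 'M[CC]_(n, m) :=
  \matrix_(i, j) Num.conj (X j i).

Definition hs (m n : nat) (X : 'M[CC]_(m, n)) : RR := \sum_i \sum_j sqn (X i j).

Lemma adj_ct m (A : 'M[CC]_m) : adj A = ct A.
Proof. by []. Qed.

Lemma hs_ge0 m n (X : 'M[CC]_(m, n)) : 0 <= hs X.
Proof. by apply: sumr_ge0 => i _; apply: sumr_ge0 => j _; exact: sqn_ge0. Qed.

Lemma hs_tr m n (X : 'M[CC]_(m, n)) : hs X = ReC (\tr (ct X *m X)).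
Proof.
rewrite /mxtrace raddf_sum /hs exchange_big /=; apply: eq_bigr => j _.
rewrite !mxE raddf_sum; apply: eq_bigr => i _.
by rewrite mxE; symmetry; apply: Re_conjM.
Qed.

Lemma ctM m n p (X : 'M[CC]_(m, n)) (Y : 'M[CC]_(n, p)) :
  ct (X *m Y) = ct Y *m ct X.
Proof.
apply/matrixP => i j; rewrite !mxE rmorph_sum; apply: eq_bigr => k _.
by rewrite !mxE rmorphM mulrC.
Qed.

Lemma ctK m n (X : 'M[CC]_(m, n)) : ct (ct X) = X.
Proof. by apply/matrixP => i j; rewrite !mxE conjCK. Qed.

Lemma ctD m n (X Y : 'M[CC]_(m, n)) : ct (X + Y) = ct X + ct Y.
Proof. by apply/matrixP => i j; rewrite !mxE rmorphD. Qed.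

Lemma ctN m n (X : 'M[CC]_(m, n)) : ct (- X) = - ct X.
Proof. by apply/matrixP => i j; rewrite !mxE rmorphN. Qed.

Lemma ct1 m : ct (1%:M : 'M[CC]_m) = 1%:M.
Proof. by apply/matrixP => i j; rewrite !mxE eq_sym conjC_nat. Qed.

Lemma hs_ct m n (X : 'M[CC]_(m, n)) : hs (ct X) = hs X.
Proof.
rewrite /hs exchange_big; apply: eq_bigr => i _; apply: eq_bigr => j _.
by rewrite mxE sqn_conj.
Qed.

Lemma hs_mulU_l m n (U : 'M[CC]_m) (X : 'M[CC]_(m, n)) :
  ct U *m U = 1%:M -> hs (U *m X) = hs X.
Proof. by move=> hU; rewrite !hs_tr ctM mulmxA -[ct X *m ct U *m U]mulmxA hU mulmx1. Qed.

Lemma hs_mulU_r m n (U : 'M[CC]_n) (X : 'M[CC]_(m, n)) :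
  U *m ct U = 1%:M -> hs (X *m U) = hs X.
Proof.
move=> hU; rewrite !hs_tr ctM mxtrace_mulC -!mulmxA.
by rewrite !mulmxA -[X *m U *m ct U]mulmxA hU mulmx1 mxtrace_mulC.
Qed.

Lemma hs_diag_l m n (c : 'rV[CC]_m) (X : 'M[CC]_(m, n)) K :
  (forall i, sqn (c 0 i) <= K) -> hs (diag_mx c *m X) <= K * hs X.
Proof.
move=> hc; rewrite /hs mulr_sumr; apply: ler_sum => i _; rewrite mulr_sumr.
apply: ler_sum => j _; rewrite mul_diag_mx mxE sqnM.
by apply: ler_wpM2r; [exact: sqn_ge0 | exact: hc].
Qed.

Lemma hs_diag_r m n (c : 'rV[CC]_n) (X : 'M[CC]_(m, n)) K :
  (forall i, sqn (c 0 i) <= K) -> hs (X *m diag_mx c) <= K * hs X.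
Proof.
move=> hc; rewrite /hs mulr_sumr; apply: ler_sum => i _; rewrite mulr_sumr.
apply: ler_sum => j _; rewrite mul_mx_diag mxE sqnM mulrC.
by apply: ler_wpM2r; [exact: sqn_ge0 | exact: hc].
Qed.

Lemma hs_add e m n (X Y : 'M[CC]_(m, n)) :
  0 < e -> hs (X + Y) <= (1 + e) * hs X + (1 + e^-1) * hs Y.
Proof.
move=> e0; rewrite /hs !mulr_sumr -big_split /=; apply: ler_sum => i _.
rewrite !mulr_sumr -big_split /=; apply: ler_sum => j _.
by rewrite mxE; exact: sqnD.
Qed.

Lemma hs_opp m n (X : 'M[CC]_(m, n)) : hs (- X) = hs X.
Proof. by apply: eq_bigr => i _; apply: eq_bigr => j _; rewrite mxE sqnN. Qed.

Lemma hs_cols m n (X : 'M[CC]_(m, n)) : hs X = \sum_j hs (col j X).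
Proof.
rewrite /hs exchange_big; apply: eq_bigr => j _; apply: eq_bigr => i _.
by rewrite big_ord1 mxE.
Qed.

Lemma hs_mul_op m n p c (A : 'M[CC]_(m, n)) (X : 'M[CC]_(n, p)) :
  (forall v : 'cV_n, hs (A *m v) <= c * hs v) -> hs (A *m X) <= c * hs X.
Proof.
move=> hA; rewrite hs_cols [hs X]hs_cols mulr_sumr; apply: ler_sum => j _.
by rewrite !colE -mulmxA; exact: hA.
Qed.

Lemma vnorm2_hs m (v : 'cV[CC]_m) : vnorm2 v = ((hs v)%:C)%C.
Proof.
rewrite /vnorm2 /hs rmorph_sum; apply: eq_bigr => i _.
by rewrite big_ord1 norm2_sqn.
Qed.

Lemma tr_bound e m n (X : 'M[CC]_(m, n)) (Y : 'M[CC]_(n, m)) : 0 < e ->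
  `|ReC (\tr (X *m Y))| <= (hs X / e + e * hs Y) / 2.
Proof.
move=> e0; rewrite /mxtrace raddf_sum.
apply: le_trans (ler_norm_sum _ _ _) _.
have -> : (hs X / e + e * hs Y) / 2 =
  \sum_i \sum_j (sqn (X i j) / e + e * sqn (Y j i)) / 2.
  under [RHS]eq_bigr => i _ do rewrite -mulr_suml big_split /= -mulr_suml -mulr_sumr.
  rewrite -mulr_suml big_split /= -mulr_suml -mulr_sumr /hs.
  by rewrite [\sum_i \sum_j sqn (Y j i)]exchange_big.
apply: ler_sum => i _; rewrite mxE raddf_sum.
apply: le_trans (ler_norm_sum _ _ _) _; apply: ler_sum => j _.
exact: Re_abs_le.
Qed.

Lemma hs1 m : hs (1%:M : 'M[CC]_m) = m%:R.
Proof.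
rewrite /hs (eq_bigr (fun _ => 1)); first by rewrite sumr_const card_ord.
move=> i _; rewrite (bigD1 i) //= big1 ?addr0; first by rewrite mxE eqxx sqn1.
by move=> j /negbTE ji; rewrite mxE eq_sym ji sqn0.
Qed.

Lemma nhs2_hs m (A : 'M[CC]_m) : nhs2 A = hs A / m%:R.
Proof. by rewrite /nhs2 /ntrRe adj_ct hs_tr. Qed.

Lemma tr_pid (F : fieldType) n r : (r <= n)%N -> \tr (pid_mx r : 'M[F]_n) = r%:R.
Proof.
move=> hrn; rewrite /mxtrace.
rewrite (eq_bigr (fun i : 'I_n => ((i < r)%N)%:R)); last first.
  by move=> i _; rewrite mxE eqxx.
rewrite -(big_mkord xpredT (fun i => ((i < r)%N)%:R)).
rewrite (big_cat_nat (leq0n r) hrn) /=.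
rewrite [X in _ + X]big_nat_cond [X in _ + X]big1 ?addr0; last first.
  by move=> i /andP[/andP[ri _] _]; rewrite ltnNge ri.
rewrite big_nat_cond (eq_bigr (fun _ => 1)); last first.
  by move=> i /andP[/andP[_ ->] _].
by rewrite -big_nat_cond sumr_const_nat subn0.
Qed.

Lemma tr_idem (F : fieldType) n (P : 'M[F]_n) : P *m P = P -> \tr P = (\rank P)%:R.
Proof.
move=> hPP.
have hP := mulmx_ebase P.
set L := col_ebase P in hP; set R := row_ebase P in hP; set Pi := pid_mx _ in hP.
have Lu : L \in unitmx by exact: col_ebase_unit.
have Ru : R \in unitmx by exact: row_ebase_unit.
have hr : (\rank P <= n)%N by exact: rank_leq_row.
have PiPi : Pi *m Pi = Pi by rewrite /Pi pid_mx_id.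
have key : Pi *m (R *m L) *m Pi = Pi.
  have : L *m Pi *m R *m (L *m Pi *m R) = L *m Pi *m R by rewrite hP.
  move=> /(congr1 (mulmx (invmx L))) /(congr1 (mulmx^~ (invmx R))).
  rewrite -!mulmxA !mulKmx // !mulmxV // !mulmx1 => ->.
  by [].
have -> : \tr P = \tr (L *m Pi *m R) by rewrite hP.
have e1 : \tr (L *m Pi *m R) = \tr (Pi *m (R *m L)).
  by rewrite -mulmxA mxtrace_mulC -mulmxA.
have e2 : \tr (Pi *m (R *m L)) = \tr (Pi *m (R *m L) *m Pi).
  by rewrite -{1}PiPi -mulmxA mxtrace_mulC.
by rewrite e1 e2 key /Pi tr_pid.
Qed.

Lemma tc_ct m n (X : 'M[CC]_(m, n)) : map_mx Num.conj (trmx X) = ct X.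
Proof. by apply/matrixP => i j; rewrite !mxE. Qed.

Lemma sum_seq_le (S : seq CC) (F : CC -> RR) x :
  (forall y, 0 <= F y) -> x \in S -> F x <= \sum_(s <- S) F s.
Proof.
move=> F0; elim: S => //= a S IH; rewrite in_cons big_cons => /orP [/eqP ->|xS].
  by rewrite lerDl sumr_ge0.
by apply: le_trans (IH xS) _; rewrite lerDr.
Qed.

Lemma ct_diag m (c : 'rV[CC]_m) :
  (forall i, Num.conj (c 0 i) = c 0 i) -> ct (diag_mx c) = diag_mx c.
Proof.
move=> hc; apply/matrixP => i j; rewrite !mxE rmorphMn eq_sym.
case: (i =P j) => [->|_] /=; first by rewrite !mulr1n; apply: hc.
by rewrite !mulr0n.
Qed.

Definition specP m (A q g : 'M[CC]_m) (K : RR) :=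
  [/\ ct q = q, q *m q = q, q *m A = A, q = A *m g &
     [/\ (forall n (X : 'M[CC]_(n, m)), hs (X *m g) <= K * hs X),
      (forall n (X : 'M[CC]_(m, n)), hs (q *m X) <= hs X),
      (forall n (X : 'M[CC]_(n, m)), hs (X *m q) <= hs X) &
      ReC (\tr q) = (\rank A)%:R ]].

Lemma spec_data m (A : 'M[CC]_m) (S : seq CC) :
  adj A = A -> (forall a, eigenvalue A a -> a \in S) ->
  exists qg : 'M[CC]_m * 'M[CC]_m,
    specP A qg.1 qg.2 (\sum_(s <- S) sqn s^-1).
Proof.
move=> hA hS; set K := \sum_(s <- S) _.
have hn : A \is normalmx.
  by rewrite qualifE /= tc_ct -adj_ct hA.
set U := spectralmx A; set D := spectral_diag A.
have hAU : A = invmx U *m diag_mx D *m U by have := elimT (@orthomx_spectralP _ _ A) hn.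
have Uu : U \is unitarymx by exact: spectral_unitarymx.
have Uun : U \in unitmx by exact: spectral_unit.
set V := ct U.
have hV : invmx U = V by rewrite invmx_unitary // tc_ct.
have UV : U *m V = 1%:M by rewrite -hV mulmxV.
have VU : V *m U = 1%:M by rewrite -hV mulVmx.
have ctV : ct V = U by rewrite ctK.
rewrite hV in hAU.
have hD : forall i, D 0 i \in S.
  move=> i; apply: hS; apply/eigenvalueP; exists (row i U).
    rewrite -row_mul {1}hAU !mulmxA UV mul1mx.
    by apply/rowP => j; rewrite mul_diag_mx !mxE.
  apply/eqP => h0.
  have : row i (U *m V) = 0 by rewrite row_mul h0 mul0mx.
  rewrite UV => /rowP /(_ i); rewrite !mxE eqxx => /eqP; by rewrite oner_eq0.
have K0 : forall i, sqn (D 0 i)^-1 <= K.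
  move=> i; rewrite /K; apply: (@sum_seq_le S (fun s => sqn s^-1)) => // y.
  exact: sqn_ge0.
set E := \row_i (D 0 i * (D 0 i)^-1).
set Di := \row_i (D 0 i)^-1.
have Ez : forall z : CC, z * z^-1 = 0 \/ z * z^-1 = 1.
  by move=> z; case: (altP (z =P 0)) => [->|z0]; [left; rewrite mul0r|right; rewrite mulfV].
have EE : \row_i (E 0 i * E 0 i) = E.
  by apply/rowP => i; rewrite !mxE; case: (Ez (D 0 i)) => ->; rewrite ?mul0r ?mul1r.
have ED : \row_i (E 0 i * D 0 i) = D.
  apply/rowP => i; rewrite !mxE; case: (altP (D 0 i =P 0)) => [->|z0].
    by rewrite !mul0r.
  by rewrite mulfV // mul1r.
have DDi : \row_i (D 0 i * Di 0 i) = E by apply/rowP => i; rewrite !mxE.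
have Ec : forall i, Num.conj (E 0 i) = E 0 i.
  by move=> i; rewrite mxE; case: (Ez (D 0 i)) => ->; rewrite ?conjC0 ?conjC1.
have Es : forall i, sqn (E 0 i) <= 1.
  by move=> i; rewrite mxE; case: (Ez (D 0 i)) => ->; rewrite ?sqn0 ?sqn1.
exists (V *m diag_mx E *m U, V *m diag_mx Di *m U); rewrite /=.
have hq : V *m diag_mx E *m U *m A = A.
  rewrite {2}hAU hAU !mulmxA -[V *m diag_mx E *m U *m V]mulmxA UV mulmx1.
  by rewrite -[V *m diag_mx E *m diag_mx D]mulmxA mulmx_diag ED.
have hg : V *m diag_mx E *m U = A *m (V *m diag_mx Di *m U).
  rewrite hAU !mulmxA -[V *m diag_mx D *m U *m V]mulmxA UV mulmx1.
  by rewrite -[V *m diag_mx D *m diag_mx Di]mulmxA mulmx_diag DDi.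
split => //; last split.
- by rewrite !ctM ctV ct_diag // mulmxA.
- rewrite !mulmxA -[V *m diag_mx E *m U *m V]mulmxA UV mulmx1.
  by rewrite -[V *m diag_mx E *m diag_mx E]mulmxA mulmx_diag EE.
- move=> n X; rewrite !mulmxA hs_mulU_r; last exact: UV.
  apply: le_trans (hs_diag_r _ (K := K) _) _.
    by move=> i; rewrite mxE; exact: K0.
  by rewrite hs_mulU_r // ctV VU.
- move=> n X; rewrite -!mulmxA hs_mulU_l; last by rewrite ctV UV.
  apply: le_trans (hs_diag_l _ (K := 1) _) _ => //.
  by rewrite mul1r hs_mulU_l.
- move=> n X; rewrite !mulmxA hs_mulU_r; last exact: UV.
  apply: le_trans (hs_diag_r _ (K := 1) _) _ => //.
  by rewrite mul1r hs_mulU_r // ctV.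
- have Pid : (V *m diag_mx E *m U) *m (V *m diag_mx E *m U) = V *m diag_mx E *m U.
    rewrite !mulmxA -[V *m diag_mx E *m U *m V]mulmxA UV mulmx1.
    by rewrite -[V *m diag_mx E *m diag_mx E]mulmxA mulmx_diag EE.
  rewrite tr_idem //.
  have -> : \rank (V *m diag_mx E *m U) = \rank A.
    apply/eqP; rewrite eqn_leq; apply/andP; split.
      by rewrite hg mxrankM_maxl.
    by rewrite -{1}hq mxrankM_maxl.
  by rewrite raddfMn.
Qed.

Lemma ulim_cvg (w : set_system nat) (u : nat -> RR) (B : RR) :
  ProperFilter w -> (forall A : set nat, w A \/ w (~` A)) ->
  (forall n, `|u n| <= B) -> u @ w --> ulim w u.
Proof.
move=> wP wU hB.
have hc : compact `[-B, B] by exact: segment_compact.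
have Fs : (u @ w) `[-B, B].
  apply: (@filterE _ w _ (u @^-1` `[-B, B])) => n /=.
  by rewrite in_itv /= -ler_norml.
have [L [_ cL]] := hc (u @ w) _ Fs.
have cv : u @ w --> L.
  move=> N NL.
  case: (wU (u @^-1` N)) => // hN.
  have hN' : (u @ w) (~` N) by [].
  have [x [/= nx Nx]] := cL _ _ hN' NL.
  by [].
have cvl := cvg_lim (@Rhausdorff RR) cv.
by rewrite /ulim cvl.
Qed.

Lemma ReCD (x y : CC) : ReC (x + y) = ReC x + ReC y.
Proof. by case: x; case: y. Qed.

Lemma key_ineq m (p q g t : 'M[CC]_m) K cp e : (0 < m)%N -> 0 < e ->
  specP t q g K -> (forall k (X : 'M[CC]_(m, k)), hs (p *m X) <= cp * hs X) ->
  hs q <= (1 + e) * (ReC (\tr p) + (hs (ct p - p) / e + e * hs p) / 2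
                        + (hs (p *m p - p) / e + e * m%:R) / 2)
          + (1 + e^-1) * (K * hs (p *m t - t)).
Proof.
move=> m0 e0 [cq qq qt qtg [hg hql hqr trq]] hp.
have -> : q = p *m q + (q - p *m q) by rewrite addrC subrK.
apply: le_trans (hs_add _ _ e0) _.
apply: lerD.
  apply: ler_wpM2l; first by rewrite addr_ge0 // ltW.
  apply: le_trans (hqr _ p) _.
  have Ehp : hs p = ReC (\tr ((ct p - p) *m p)) + ReC (\tr ((p *m p - p) *m 1%:M))
                  + ReC (\tr p).
    have E : ct p *m p = (ct p - p) *m p + (p *m p - p) *m 1%:M + p.
      by rewrite mulmxBl mulmx1 -!addrA addNr addr0 addNr addr0.
    by rewrite hs_tr E !mxtraceD !ReCD.
  rewrite {1}Ehp.
  have hA : ReC (\tr ((ct p - p) *m p)) <= (hs (ct p - p) / e + e * hs p) / 2.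
    by apply: le_trans (ler_norm _) _; exact: tr_bound.
  have hB : ReC (\tr ((p *m p - p) *m 1%:M)) <= (hs (p *m p - p) / e + e * m%:R) / 2.
    have := tr_bound (p *m p - p) 1%:M e0; rewrite hs1 => h.
    exact: le_trans (ler_norm _) h.
  lra.
apply: ler_wpM2l; first by rewrite addr_ge0 // ltW // invr_gt0.
have -> : q - p *m q = (t - p *m t) *m g by rewrite mulmxBl -mulmxA -qtg.
apply: le_trans (hg _ _) _.
by rewrite -opprB hs_opp.
Qed.

Lemma final_real (b a x1 x2 x3 La Lb cp K e : RR) :
  0 < e -> e <= 1 -> 0 <= K -> 0 <= cp ->
  x1 <= e ^+ 2 -> x2 <= e ^+ 2 -> x3 <= e ^+ 2 ->
  `|La - a| <= e -> `|Lb - b| <= e ->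
  b <= (1 + e) * (a + (x1 / e + e * cp) / 2 + (x2 / e + e) / 2) + (1 + e^-1) * (K * x3) ->
  Lb <= La + e * (1 + `|La| + (5 + cp) + 2 * K).
Proof.
move=> e0 e1 K0 cp0 h1 h2 h3 ha hb hk.
have ie : e * e^-1 = 1 by rewrite mulfV // gt_eqF.
have ie0 : 0 < e^-1 by rewrite invr_gt0.
have d1 : x1 / e <= e.
  have : x1 * e^-1 <= e ^+ 2 * e^-1 by rewrite ler_wpM2r // ltW.
  by rewrite expr2 -mulrA ie mulr1.
have d2 : x2 / e <= e.
  have : x2 * e^-1 <= e ^+ 2 * e^-1 by rewrite ler_wpM2r // ltW.
  by rewrite expr2 -mulrA ie mulr1.
have d3 : (1 + e^-1) * (K * x3) <= 2 * K * e.
  have : (1 + e^-1) * (K * x3) <= (1 + e^-1) * (K * e ^+ 2).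
    by rewrite ler_wpM2l ?ler_wpM2l // addr_ge0 // ltW.
  move=> h; apply: le_trans h _.
  have -> : (1 + e^-1) * (K * e ^+ 2) = K * e * e + K * e.
    by rewrite expr2 mulrDl mul1r -!mulrA [e^-1 * _]mulrC -!mulrA ie mulr1.
  have : K * e * e <= K * e * 1 by rewrite ler_wpM2l // mulr_ge0 // ltW.
  lra.
have La_abs : La <= `|La| by exact: ler_norm.
rewrite ler_norml in ha; rewrite ler_norml in hb.
move/andP: ha => [ha1 ha2]; move/andP: hb => [hb1 hb2].
have hk' : b <= (1 + e) * (a + (e + e * cp) / 2 + (e + e) / 2) + 2 * K * e.
  apply: le_trans hk _; apply: lerD => //.
  by apply: ler_wpM2l; [rewrite addr_ge0 // ltW | lra].
have : (1 + e) * (a + (e + e * cp) / 2 + (e + e) / 2) <=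
       (1 + e) * (La + e + (e + e * cp) / 2 + (e + e) / 2).
  by apply: ler_wpM2l; [rewrite addr_ge0 // ltW | lra].
move=> h4.
have ee : e * e <= e * 1 by rewrite ler_wpM2l // ltW.
rewrite mulr1 in ee.
have ecp : e * e * cp <= e * cp by rewrite ler_wpM2r.
have eLa : e * La <= e * `|La| by rewrite ler_wpM2l // ltW.
nra.
Qed.

Lemma key_ineq_n m (p q g t : 'M[CC]_m) K cp e : (0 < m)%N -> 0 < e ->
  specP t q g K -> (forall k (X : 'M[CC]_(m, k)), hs (p *m X) <= cp * hs X) ->
  hs q / m%:R <= (1 + e) * (ReC (\tr p) / m%:R + (hs (ct p - p) / m%:R / e + e * cp) / 2
                + (hs (p *m p - p) / m%:R / e + e) / 2)
               + (1 + e^-1) * (K * (hs (p *m t - t) / m%:R)).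
Proof.
move=> m0 e0 sp hp.
have h := key_ineq m0 e0 sp hp.
have hpb : hs p <= cp * m%:R by have := hp _ 1%:M; rewrite mulmx1 hs1.
have mm0 : 0 < (m%:R : RR) by rewrite ltr0n.
rewrite ler_pdivrMr //; apply: le_trans h _.
set T := ReC _; set H1 := hs (ct p - p); set H2 := hs (p *m p - p); set H3 := hs (p *m t - t).
have -> : ((1 + e) * (T / m%:R + (H1 / m%:R / e + e * cp) / 2 + (H2 / m%:R / e + e) / 2)
    + (1 + e^-1) * (K * (H3 / m%:R))) * m%:R =
    (1 + e) * (T + (H1 / e + e * (cp * m%:R)) / 2 + (H2 / e + e * m%:R) / 2)
    + (1 + e^-1) * (K * H3).
  by field; rewrite !gt_eqF.
have h5 : (1 + e) * (e * hs p) <= (1 + e) * (e * (cp * m%:R)).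
  by rewrite ler_wpM2l ?ler_wpM2l // ?addr_ge0 // ltW.
lra.
Qed.

Lemma hs0 m n : hs (0 : 'M[CC]_(m, n)) = 0.
Proof. by rewrite /hs big1 // => i _; rewrite big1 // => j _; rewrite mxE sqn0. Qed.

Lemma opb (d : nat -> nat) (x : mxseq d) : op_bounded x ->
  exists c : RR, 0 <= c /\ forall n k (X : 'M[CC]_(d n, k)), hs (x n *m X) <= c * hs X.
Proof.
move=> [c0 h]; exists (c0 ^+ 2); split; first exact: sqr_ge0.
move=> n k X; apply: hs_mul_op => v.
have := h n v; rewrite !vnorm2_hs -rmorphXn -rmorphM /=.
by rewrite lecR.
Qed.

Lemma ulim_near (w : set_system nat) (u : nat -> RR) (B : RR) :
  ProperFilter w -> (forall A : set nat, w A \/ w (~` A)) ->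
  (forall n, `|u n| <= B) -> forall e, 0 < e -> w [set n | `|ulim w u - u n| <= e].
Proof.
move=> wP wU hB e e0.
have h := ulim_cvg wP wU hB.
have := iffLR (@cvgrPdist_le RR RR^o _ w _ u (ulim w u)) h e e0.
by move=> /(_ _); apply.
Qed.

Lemma hs_le2 m n (X Y : 'M[CC]_(m, n)) : hs (X + Y) <= 2 * hs X + 2 * hs Y.
Proof. by have := hs_add X Y ltr01; rewrite invr1. Qed.

Lemma nhs2_bound m (X : 'M[CC]_m) B : (0 < m)%N -> hs X <= B * m%:R -> `|nhs2 X| <= B.
Proof.
move=> m0 h; have mm : (0 : RR) < m%:R by rewrite ltr0n.
rewrite nhs2_hs ger0_norm ?divr_ge0 ?hs_ge0 ?ler0n //.
by rewrite ler_pdivrMr.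
Qed.

Theorem mainTheorem5 (w : set_system nat) (d : nat -> nat) (t : mxseq d) :
  nonprincipal_ultrafilter w ->
  (forall n, (0 < d n)%N) ->
  op_bounded t ->
  (forall n, adj (t n) = t n) ->
  (exists S : seq CC, forall (n : nat) (a : CC), eigenvalue (t n) a -> a \in S) ->
  rk1 w t = rk2 w t.
Proof.
move=> [wP wU _] d0 tb herm [S hS].
set K := \sum_(s <- S) sqn s^-1.
have K0 : 0 <= K by apply: sumr_ge0 => s _; exact: sqn_ge0.
have hex : forall n, exists qg : 'M[CC]_(d n) * 'M[CC]_(d n), specP (t n) qg.1 qg.2 K.
  by move=> n; apply: spec_data (herm n) (hS n).
pose qg n := projT1 (cid (hex n)).
have hsp : forall n, specP (t n) (qg n).1 (qg n).2 K.
  by move=> n; exact: (projT2 (cid (hex n))).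
pose q : mxseq d := fun n => (qg n).1.
have mpos : forall n, (0 : RR) < (d n)%:R by move=> n; rewrite ltr0n.
have hsq : forall n, hs (q n) = (\rank (t n))%:R.
  move=> n; case: (hsp n) => cq qq _ _ [_ _ _ trq].
  by rewrite hs_tr cq qq trq.
have ulim_cst : forall c : RR, ulim w (fun _ => c) = c.
  by move=> c; rewrite /ulim lim_cst //; exact: Rhausdorff.
have Mq : Mtr w q = rk2 w t.
  rewrite /Mtr /rk2; congr (ulim w _); apply: funext => n.
  by rewrite /ntrRe; case: (hsp n) => _ _ _ _ [_ _ _ ->].
have Eq : exists p : mxseq d,
    [/\ Mproj w p, Meq w (fun n => p n *m t n) t & rk2 w t = Mtr w p].
  exists q; split; last by rewrite Mq.
  - split.
    + exists 1 => n v; rewrite !vnorm2_hs rmorph1 expr1n mul1r lecR.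
      by case: (hsp n) => _ _ _ _ [_ hl _ _]; exact: hl.
    + rewrite /Meq (_ : (fun n => _) = fun _ => 0) ?ulim_cst //.
      apply: funext => n; case: (hsp n) => _ qq _ _ _.
      by rewrite /q qq subrr nhs2_hs hs0 mul0r.
    + rewrite /Meq (_ : (fun n => _) = fun _ => 0) ?ulim_cst //.
      apply: funext => n; case: (hsp n) => cq _ _ _ _.
      by rewrite adj_ct /q cq subrr nhs2_hs hs0 mul0r.
  - rewrite /Meq (_ : (fun n => _) = fun _ => 0) ?ulim_cst //.
    apply: funext => n; case: (hsp n) => _ _ qt _ _.
    by rewrite /q qt subrr nhs2_hs hs0 mul0r.
have LB : forall p : mxseq d,
    Mproj w p -> Meq w (fun n => p n *m t n) t -> rk2 w t <= Mtr w p.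
  move=> p [pb hpp hpa] hpt.
  have [cp [cp0 hp]] := opb pb.
  have [c_t [ct0 htm]] := opb tb.
  have hpm : forall n, hs (p n) <= cp * (d n)%:R.
    by move=> n; have := hp n _ 1%:M; rewrite mulmx1 hs1.
  have htmm : forall n, hs (t n) <= c_t * (d n)%:R.
    by move=> n; have := htm n _ 1%:M; rewrite mulmx1 hs1.
  set a := fun n => ntrRe (p n).
  have ba : forall n, `|a n| <= (cp + 1) / 2.
    move=> n; rewrite /a /ntrRe normrM normfV (ger0_norm (ltW (mpos n))).
    rewrite ler_pdivrMr //.
    have := tr_bound (p n) 1%:M ltr01; rewrite mulmx1 hs1 invr1 mulr1 mul1r => h.
    apply: le_trans h _; have := hpm n; lra.
  set b := fun n => (\rank (t n))%:R / (d n)%:R : RR.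
  have bb : forall n, `|b n| <= 1.
    move=> n; rewrite /b ger0_norm ?divr_ge0 ?ler0n // ler_pdivrMr // mul1r ler_nat.
    exact: rank_leq_row.
  have b1 : forall n, `|nhs2 (adj (p n) - p n)| <= 4 * cp.
    move=> n; apply: nhs2_bound => //; apply: le_trans (hs_le2 _ _) _.
    rewrite adj_ct hs_ct hs_opp; have := hpm n; lra.
  have b2 : forall n, `|nhs2 (p n *m p n - p n)| <= 2 * cp * cp + 2 * cp.
    move=> n; apply: nhs2_bound => //; apply: le_trans (hs_le2 _ _) _.
    rewrite hs_opp; have := hpm n; have := hp n _ (p n).
    have : cp * hs (p n) <= cp * (cp * (d n)%:R) by rewrite ler_wpM2l.
    lra.
  have b3 : forall n, `|nhs2 (p n *m t n - t n)| <= (2 * cp + 2) * c_t.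
    move=> n; apply: nhs2_bound => //; apply: le_trans (hs_le2 _ _) _.
    rewrite hs_opp; have := htmm n; have := hp n _ (t n).
    have : cp * hs (t n) <= cp * (c_t * (d n)%:R) by rewrite ler_wpM2l.
    lra.
  apply/ler_addgt0Pr => eps eps0.
  set La := Mtr w p; set Lb := rk2 w t.
  set M := 1 + `|La| + (5 + cp) + 2 * K.
  have M0 : 0 < M.
    by rewrite /M; have := normr_ge0 La; lra.
  set e := eps / (M + eps).
  have Me0 : 0 < M + eps by lra.
  have e0 : 0 < e by rewrite divr_gt0.
  have e1 : e <= 1 by rewrite ler_pdivrMr // mul1r; lra.
  have eM : e * M <= eps.
    rewrite /e mulrAC ler_pdivrMr //.
    have : eps * M <= eps * (M + eps) by rewrite ler_wpM2l ?ltW //; lra.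
    by [].
  have e20 : 0 < e ^+ 2 by rewrite exprn_gt0.
  have W1 := ulim_near wP wU ba e0.
  have W2 := ulim_near wP wU bb e0.
  have W3 := ulim_near wP wU b1 e20.
  have W4 := ulim_near wP wU b2 e20.
  have W5 := ulim_near wP wU b3 e20.
  have [n [[[[H1 H2] H3] H4] H5]] :=
    filter_ex (filterI (filterI (filterI (filterI W1 W2) W3) W4) W5).
  rewrite /= in H1 H2 H3 H4 H5.
  have hpa' : ulim w (fun n => nhs2 (adj (p n) - p n)) = 0 by exact: hpa.
  rewrite hpa' sub0r normrN in H3.
  have hpp' : ulim w (fun n => nhs2 (p n *m p n - p n)) = 0 by exact: hpp.
  rewrite hpp' sub0r normrN in H4.
  have hpt' : ulim w (fun n => nhs2 (p n *m t n - t n)) = 0 by exact: hpt.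
  rewrite hpt' sub0r normrN in H5.
  have X3 := le_trans (ler_norm _) H3.
  have X4 := le_trans (ler_norm _) H4.
  have X5 := le_trans (ler_norm _) H5.
  have hk := key_ineq_n (d0 n) e0 (hsp n) (hp n).
  rewrite hsq -!nhs2_hs -adj_ct in hk.
  have := final_real e0 e1 K0 cp0 X3 X4 X5 H1 H2 hk.
  have : e * (1 + `|La| + (5 + cp) + 2 * K) <= eps by [].
  have eLa : ulim w a = La by []. have eLb : ulim w b = Lb by [].
  rewrite eLa eLb => hA hB; lra.
have E0 : [set r | exists p : mxseq d,
    [/\ Mproj w p, Meq w (fun n => p n *m t n) t & r = Mtr w p]] (rk2 w t) by [].
rewrite /rk1; apply/eqP; rewrite eq_le; apply/andP; split.
  apply: (ge_inf _ E0).
  exists (rk2 w t) => r [p [hp1 hp2 ->]]; exact: LB.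
apply: lb_le_inf; first by exists (rk2 w t).
by move=> r [p [hp1 hp2 ->]]; exact: LB.
Qed.
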